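(* Let $\lambda$ be a nonzero real number and $n$ a positive integer. Then, as polynomials in $x$, $$\phi_{n+1,\lambda}(x)=x\phi_{n,\lambda}(x)+\Big(x\frac{d}{dx}-n\lambda\Big)\phi_{n,\lambda}(x)=x\sum_{k=0}^{n}\binom{n}{k}(1-\lambda)_{n-k,\lambda}\,\phi_{k,\lambda}(x).$$
   Context: For real $y$ and integer $k\ge0$: $(y)_{0,\lambda}=1$, $(y)_{k,\lambda}=y(y-\lambda)\cdots(y-(k-1)\lambda)$. The degenerate exponential is $e_\lambda(t)=\sum_{k\ge0}(1)_{k,\lambda}t^k/k!=(1+\lambda t)^{1/\lambda}$. The degenerate Bell polynomials $\phi_{n,\lambda}(x)$ are defined by $e^{x(e_\lambda(t)-1)}=\sum_{n\ge0}\phi_{n,\lambda}(x)\frac{t^n}{n!}$. *)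

(* Defs.v *)
From HB Require Import structures.
From mathcomp Require Import all_boot all_order all_algebra.
From mathcomp Require Import reals.
Set Implicit Arguments. Unset Strict Implicit. Unset Printing Implicit Defensive.
Import Order.TTheory GRing.Theory Num.Theory.
Local Open Scope ring_scope.

Definition dfall (R : ringType) (y : R) (k : nat) (lam : R) : R :=
  \prod_(i < k) (y - i%:R * lam).

(* Truncation to degree <= n (in t) of e_lambda(t) - 1 = sum_{j>=1} (1)_{j,lambda} t^j / j!. *)
Definition elam_trunc (R : fieldType) (lam : R) (n : nat) : {poly R} :=
  \sum_(1 <= j < n.+1) ((j`!%:R)^-1 * dfall 1 j lam) *: 'X^j.

(* Degenerate Bell polynomial phi_{n,lambda}(x), as a polynomial in x:
   n! times the coefficient of t^n in the formal power series
   exp(x (e_lambda(t) - 1)) = sum_k x^k (e_lambda(t)-1)^k / k!.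
   Since e_lambda(t) - 1 has zero constant term, only k <= n contribute and
   the coefficient of t^n in (e_lambda(t)-1)^k equals that of (elam_trunc n)^k. *)
Definition dbell (R : fieldType) (n : nat) (lam : R) : {poly R} :=
  n`!%:R *: \sum_(k < n.+1) ((k`!%:R)^-1 * ((elam_trunc lam n) ^+ k)`_n) *: 'X^k.

(* Main.v *)
Require Import Defs.
From HB Require Import structures.
From mathcomp Require Import all_boot all_order all_algebra.
From mathcomp Require Import reals.
From mathcomp Require Import ring lra zify.
Import Order.TTheory GRing.Theory Num.Theory.
Local Open Scope ring_scope.

Section H.
Variable R : realType.
Variable lam : R.

Definition ee (i : nat) : R := (i`!%:R)^-1 * dfall 1 i lam.

Lemma natn0 (m : nat) : (m.+1%:R : R) != 0.
Proof. by rewrite pnatr_eq0. Qed.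

Lemma factn0 (m : nat) : (m`!%:R : R) != 0.
Proof. by rewrite pnatr_eq0 -lt0n fact_gt0. Qed.

Lemma coef_E N i : (elam_trunc lam N)`_i = if (0 < i <= N)%N then ee i else 0.
Proof.
elim: N => [|N IH].
  by rewrite /elam_trunc big_geq // coef0; case: i => [|[]].
rewrite /elam_trunc big_nat_recr //= -/(elam_trunc lam N) coefD coefZ coefXn IH.
case: (ltngtP i N.+1) => [h|h|->].
- have h' : (i <= N)%N by [].
  by rewrite h' andbT mulr0 addr0.
- by rewrite mulr0 addr0 andbF (leqNgt i N) (ltnW h) andbF.
- by rewrite ltnn andbF andbT mulr1 add0r /ee.
Qed.

Lemma dfallS1 m : dfall 1 m.+1 lam = dfall (1 - lam) m lam.
Proof.
rewrite /dfall big_ord_recl /= mul0r subr0 mul1r.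
apply: eq_bigr => i _; rewrite /bump /= add1n -addn1 natrD; ring.
Qed.

Lemma dfallS y m : dfall y m.+1 lam = dfall y m lam * (y - m%:R * lam).
Proof. by rewrite /dfall big_ord_recr. Qed.

Lemma coef_dE N m : (m < N)%N ->
  (elam_trunc lam N)^`()`_m = dfall 1 m.+1 lam / m`!%:R.
Proof.
move=> h; rewrite coef_deriv coef_E /= h /ee factS natrM -mulr_natr.
have := factn0 m; have := natn0 m; move=> *; field; by rewrite factn0 addrC natr1 natn0.
Qed.


Lemma mul_agree (p q r : {poly R}) N m :
  (forall i, (i < N)%N -> p`_i = q`_i) -> (m < N)%N -> (p * r)`_m = (q * r)`_m.
Proof.
move=> h hm; rewrite !coefM; apply: eq_bigr => [[j hj]] _ /=.
by rewrite h // (leq_ltn_trans _ hm).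
Qed.

Lemma exp_agree (p q : {poly R}) N k m :
  (forall i, (i <= N)%N -> p`_i = q`_i) -> (m <= N)%N -> (p ^+ k)`_m = (q ^+ k)`_m.
Proof.
move=> h; elim: k m => [|k IH] m hm; first by rewrite !expr0.
rewrite !exprS !coefM; apply: eq_bigr => [[j hj]] _ /=.
by rewrite h ?IH // ?(leq_trans (leq_subr _ _) hm) // (leq_trans _ hm).
Qed.

Lemma E_agree N M k m : (m <= N)%N -> (N <= M)%N ->
  ((elam_trunc lam N)^+k)`_m = ((elam_trunc lam M)^+k)`_m.
Proof.
move=> hm hN; apply: (@exp_agree _ _ N) => // i hi.
by rewrite !coef_E hi (leq_trans hi hN).
Qed.

Lemma E_vanish N k m : (m < k)%N -> ((elam_trunc lam N)^+k)`_m = 0.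
Proof.
elim: k m => [|k IH] m hm //.
rewrite exprS coefM big1 // => [[j hj]] _ /=.
case: j hj => [|j] hj; first by rewrite coef_E mul0r.
by rewrite IH ?mulr0 //; lia.
Qed.

Lemma coef_dbell n j : (dbell n lam)`_j =
  n`!%:R * ((j`!%:R)^-1 * ((elam_trunc lam n)^+j)`_n).
Proof.
rewrite /dbell -(poly_def _ (fun k => (k`!%:R^-1 * (elam_trunc lam n ^+ k)`_n))).
rewrite coefZ coef_poly; case: ifP => // h.
by rewrite E_vanish ?mulr0 //; rewrite ltnNge -ltnS h.
Qed.

Lemma keyA N m : (m < N)%N ->
  ((1 + lam *: 'X) * (elam_trunc lam N)^`())`_m = (1 + elam_trunc lam N)`_m.
Proof.
move=> hm; rewrite mulrDl mul1r -scalerAl coefD coefZ coefXM coefD coef1 coef_E.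
case: m hm => [|m] hm /=.
  by rewrite coef_dE // mulr0 !addr0 /dfall big_ord1 mul0r subr0 fact0 invr1 mulr1.
rewrite (@coef_dE N m.+1 hm) (@coef_dE N m (ltnW hm)) dfallS add0r (ltnW hm) /ee factS natrM.
have := factn0 m; have := natn0 m; move=> *; field; by rewrite factn0 addrC natr1 natn0.
Qed.


Lemma key2 n i : let F := elam_trunc lam n.+1 in
  (n.+1)%:R * (F ^+ i.+1)`_n.+1 =
  (i.+1)%:R * \sum_(k < n.+1) (F ^+ i)`_k * (dfall (1 - lam) (n - k) lam / (n - k)`!%:R).
Proof.
move=> F.
have DE := deriv_exp F i.+1; have := congr1 (fun p : {poly R} => p`_n) DE.
rewrite coef_deriv coefMn /= mulrC coefM => H.
rewrite mulr_natl H mulr_natl; congr (_ *+ _); apply: eq_bigr => [[k hk]] _ /=.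
by rewrite coef_dE ?dfallS1 // ltnS leq_subr.
Qed.


Lemma key1 n i : let F := elam_trunc lam n.+2 in
  (n.+2)%:R * (F^+i.+1)`_n.+2 + lam * ((n.+1)%:R * (F^+i.+1)`_n.+1) =
  (i.+1)%:R * ((F^+i)`_n.+1 + (F^+i.+1)`_n.+1).
Proof.
move=> F.
have h2 : (((1 + lam *: 'X) * F^`()) * F^+i)`_n.+1 = ((1+F) * F^+i)`_n.+1.
  by apply: (@mul_agree _ _ _ n.+2) => // m hm; apply: keyA.
have : ((1 + lam *: 'X) * (F^+i.+1)^`())`_n.+1 = ((1+F) * F^+i)`_n.+1 *+ i.+1.
  by rewrite deriv_exp /= mulrnAr coefMn mulrA h2.
rewrite mulrDl mul1r -scalerAl coefD coefZ coefXM /= !coef_deriv mulrDl mul1r -exprS coefD.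
by rewrite !mulr_natl.
Qed.

End H.

Theorem theorem11 (R : realType) (lam : R) (n : nat) :
  lam != 0 -> (0 < n)%N ->
  dbell n.+1 lam = 'X * dbell n lam + ('X * (dbell n lam)^`() - (n%:R * lam) *: dbell n lam)
  /\ dbell n.+1 lam =
     'X * \sum_(k < n.+1) ('C(n, k)%:R * dfall (1 - lam) (n - k) lam) *: dbell k lam.
Proof.
move=> _ hn; split.
  case: n hn => // n _.
  apply/polyP => j; rewrite coef_dbell coefD coefB coefZ !coefXM; case: j => [|i] /=.
    by rewrite !coef_dbell !expr0 !coef1 /= !mulr0 subr0 addr0.
  rewrite coef_deriv !coef_dbell !(@E_agree _ _ n.+1 n.+2 _ n.+1) //.
  set F := elam_trunc lam n.+2.
  have := @key1 R lam n i; rewrite -/F => K.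
  have -> : (F ^+ i.+1)`_n.+2 = ((i.+1)%:R * ((F^+i)`_n.+1 + (F^+i.+1)`_n.+1)
     - lam * ((n.+1)%:R * (F^+i.+1)`_n.+1)) / (n.+2)%:R.
    rewrite -K; have := natn0 R n.+1; move=> ?; field; have := ler0n R n; move=> ?; lra.
  set a := (F ^+ i)`_n.+1; set b := (F ^+ i.+1)`_n.+1.
  rewrite !factS !natrM.
  have := factn0 R n; have := factn0 R i; have := natn0 R n.+1; have := natn0 R i.
  move=> *; field.
  rewrite factn0 /=; have := ler0n R n; have := ler0n R i; move=> ? ?.
  apply/andP; split; lra.
apply/polyP => j; rewrite coefXM; case: j => [|i] /=.
  by rewrite coef_dbell expr0 coef1 /= !mulr0.
rewrite coef_sum coef_dbell.
under eq_bigr => k _ do rewrite coefZ coef_dbell (@E_agree _ _ k n.+1 i k (leqnn k) (ltnW (ltn_ord k))).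
set F := elam_trunc lam n.+1.
have := @key2 R lam n i; rewrite -/F => K.
have -> : (F ^+ i.+1)`_n.+1 = (i.+1)%:R / (n.+1)%:R *
  \sum_(k < n.+1) (F ^+ i)`_k * (dfall (1 - lam) (n - k) lam / (n - k)`!%:R).
  apply: (mulfI (natn0 R n)); rewrite K; have := natn0 R n; move=> ?; field; by rewrite addrC natr1.
rewrite !mulr_sumr; apply: eq_bigr => [[k hk]] _ /=.
have hb : ('C(n, k)%:R : R) = n`!%:R / (k`!%:R * (n - k)`!%:R).
  by rewrite -(@bin_fact n k hk) !natrM mulfK // mulf_neq0 ?factn0.
rewrite hb !factS !natrM.
have := factn0 R n; have := factn0 R k; have := factn0 R (n - k); have := factn0 R i.
have := natn0 R n; have := natn0 R i.
move=> *; field.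
by rewrite !factn0 !(addrC 1) !natr1 !natn0.
Qed.
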